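(* Let $\mathcal{X}$ be a real vector space and $\mathcal{C}$ a family of subsets of $\mathcal{X}$ such that every $C\in\mathcal{C}$ is a symmetric, algebraically open, convex set containing $0$ for which the locally convex topology $\tau_C$ generated by $C$ is separable. Let $\tau(\mathcal{C})$ be the locally convex topology on $\mathcal{X}$ for which $\mathcal{C}_0$ is a local basis at $0$, and let $\mathcal{F}(\mathcal{C})=\sigma\big(\bigcup_{x\in\mathcal{X}}\mathcal{C}_x\big)$. Then $(\mathcal{X},\tau(\mathcal{C}),\mathcal{F}(\mathcal{C}))$ satisfies: (LM1) every point admits a local basis of neighborhoods consisting of $\mathcal{F}(\mathcal{C})$-measurable sets; (LM2) every $\tau(\mathcal{C})$-continuous linear functional is $\mathcal{F}(\mathcal{C})$-measurable; (LM3) the addition $(x,y)\mapsto x+y$ is measurable from $(\mathcal{X}^2,\mathcal{F}(\mathcal{C})\otimes\mathcal{F}(\mathcal{C}))$ to $(\mathcal{X},\mathcal{F}(\mathcal{C}))$; (LM4) $\mathcal{F}(\mathcal{C})$ is invariant under dilations $x\mapsto tx$, $t\neq0$.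
   Context: A set $C\subset\mathcal{X}$ is algebraically open if for every $x\in C$ and $y\in\mathcal{X}$ there is $\varepsilon>0$ with $x+ty\in C$ for $|t|<\varepsilon$. For such symmetric convex $C\ni0$, its Minkowski functional $M_C$ is a seminorm and $\tau_C$ is the topology induced by $M_C$. For $x\in\mathcal{X}$, $\mathcal{C}_x=\{x+\bigcap_{i=1}^r\lambda_iC_i : r\ge0,\ C_i\in\mathcal{C},\ \lambda_i>0\}$. *)

(* Defs.v *)
From HB Require Import structures.
From mathcomp Require Import all_boot all_order all_algebra.
From mathcomp Require Import all_classical all_reals.
From mathcomp Require Import topology normedtype measure.
Set Implicit Arguments. Unset Strict Implicit. Unset Printing Implicit Defensive.
Import Order.TTheory GRing.Theory Num.Theory.
Import numFieldNormedType.Exports.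
Local Open Scope classical_set_scope.
Local Open Scope ring_scope.

Section Defs.
Variables (R : realType) (X : lmodType R).

Definition symmetric_set (C : set X) : Prop := forall x, C x -> C (- x).

Definition alg_open (C : set X) : Prop :=
  forall x y, C x -> exists2 e : R, 0 < e & forall t : R, `|t| < e -> C (x + t *: y).

Definition convex_set (C : set X) : Prop :=
  forall x y (t : R), 0 <= t -> t <= 1 -> C x -> C y -> C (t *: x + (1 - t) *: y).

Definition scale_set (l : R) (C : set X) : set X := [set l *: z | z in C].

Definition minkowski (C : set X) (x : X) : R :=
  inf [set l : R | 0 < l /\ scale_set l C x].

(* the seminorm topology tau_C is separable: it has a countable dense subset
   (density w.r.t. the topology induced by the seminorm M_C) *)
Definition tauC_separable (C : set X) : Prop :=
  exists D : set X, countable D /\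
    forall x (e : R), 0 < e -> exists2 d, D d & minkowski C (x - d) < e.

Definition Cfam (CC : set (set X)) (x : X) : set (set X) :=
  [set V | exists (r : nat) (Cs : 'I_r -> set X) (l : 'I_r -> R),
     (forall i, CC (Cs i)) /\ (forall i, 0 < l i) /\
     V = [set x + y | y in \bigcap_(i in [set: 'I_r]) scale_set (l i) (Cs i)]].

(* neighborhoods of x in tau(CC): sets containing a member of C_x
   (C_0 is a local basis at 0, hence C_x = x + C_0 one at x) *)
Definition tau_nbhs (CC : set (set X)) (x : X) (W : set X) : Prop :=
  exists2 V, Cfam CC x V & V `<=` W.

Definition FC (CC : set (set X)) : set (set X) :=
  <<s \bigcup_(x in [set: X]) Cfam CC x >>.

Definition prod_sigma (F G : set (set X)) : set (set (X * X)) :=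
  <<s [set A `*` B | A in F & B in G] >>.

End Defs.

Definition borelR (R : realType) : set (set R) := <<s [set U : set R | open U] >>.

(* Main.v *)
Require Import Defs.
From HB Require Import structures.
From mathcomp Require Import all_boot all_order all_algebra.
From mathcomp Require Import all_classical all_reals.
From mathcomp Require Import topology normedtype measure.
From mathcomp Require Import ring lra.
Import Order.TTheory GRing.Theory Num.Theory.
Import numFieldNormedType.Exports.
Local Open Scope classical_set_scope.
Local Open Scope ring_scope.

Lemma open_ballR (R: realType) (U : set R) y : open U -> U y ->
  exists2 e : R, 0 < e & forall t, `|y - t| < e -> U t.
Proof.
rewrite openE => oU Uy.
have /nbhs_ballP[e e0 he] := oU y Uy.
exists e => // t yt; apply: he; by rewrite -ball_normE.
Qed.
Arguments open_ballR {R U y}.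

Section OneC.
Variables (R : realType) (X : lmodType R) (C : set X).
Hypotheses (Csym : symmetric_set C) (Cao : alg_open C) (Ccv : convex_set C) (C0 : C 0).

Lemma sc_mul a c z : scale_set a C z -> scale_set (c * a) C (c *: z).
Proof. by case=> w Cw <-; exists w => //; rewrite scalerA. Qed.

Lemma sc_mono s t z : 0 < s -> s <= t -> scale_set s C z -> scale_set t C z.
Proof.
move=> s0 st [c Cc <-].
have t0 : 0 < t by apply: lt_le_trans st.
exists ((s / t) *: c + (1 - s / t) *: 0).
  apply: Ccv => //; first by rewrite divr_ge0 // ltW.
  by rewrite ler_pdivrMr // mul1r.
by rewrite scaler0 addr0 scalerA mulrCA mulfV ?mulr1 // gt_eqF.
Qed.

Lemma sc_add s t z w : 0 < s -> 0 < t -> scale_set s C z -> scale_set t C w ->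
  scale_set (s + t) C (z + w).
Proof.
move=> s0 t0 [c Cc <-] [c' Cc' <-].
have st0 : 0 < s + t by rewrite addr_gt0.
exists ((s / (s + t)) *: c + (1 - s / (s + t)) *: c').
  apply: Ccv => //; first by rewrite divr_ge0 // ltW.
  by rewrite ler_pdivrMr // mul1r lerDl ltW.
rewrite scalerDr !scalerA mulrCA mulfV ?mulr1 ?gt_eqF //.
congr (_ + _); congr (_ *: _).
rewrite mulrBr mulr1 mulrCA mulfV ?mulr1 ?gt_eqF //.
by rewrite addrC addKr.
Qed.

Lemma sc_opp s z : scale_set s C z -> scale_set s C (- z).
Proof. by case=> c Cc <-; exists (- c); [apply: Csym | rewrite scalerN]. Qed.

Lemma sc_abs t a z : scale_set a C z -> scale_set (`|t| * a) C (t *: z).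
Proof.
move=> [c Cc <-].
case: (lerP 0 t) => t0.
  by exists c => //; rewrite ger0_norm // scalerA.
exists (- c); first exact: Csym.
by rewrite ltr0_norm // scalerA scalerN -scaleNr mulNr opprK.
Qed.

Lemma sc_margin t z : 0 < t -> scale_set t C z ->
  exists s, [/\ 0 < s, s < t & scale_set s C z].
Proof.
move=> t0 [c Cc <-].
have [e e0 he] := Cao c c Cc.
have e20 : 0 < e / 2 by rewrite divr_gt0.
have hC : C (c + (e / 2) *: c).
  apply: he; rewrite gtr0_norm //.
  by rewrite ltr_pdivrMr // ltr_pMr // ltr1n.
have k0 : 0 < 1 + e / 2 by rewrite addr_gt0.
exists (t / (1 + e / 2)); split.
- by rewrite divr_gt0.
- by rewrite ltr_pdivrMr // ltr_pMr // ltrDl.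
- exists (c + (e / 2) *: c) => //.
  rewrite -{1}(scale1r c) -scalerDl scalerA -mulrA mulVf ?mulr1 //.
  by rewrite gt_eqF.
Qed.

Lemma sc_exists z : exists2 t, 0 < t & scale_set t C z.
Proof.
have [e e0 he] := Cao 0 z C0.
have e20 : 0 < e / 2 by rewrite divr_gt0.
have hC : C (0 + (e / 2) *: z).
  apply: he; rewrite gtr0_norm //.
  by rewrite ltr_pdivrMr // ltr_pMr // ltr1n.
exists (e / 2)^-1; first by rewrite invr_gt0.
exists (0 + (e / 2) *: z) => //.
by rewrite add0r scalerA mulVf ?scale1r // gt_eqF.
Qed.

Lemma sc_mink t z : 0 < t -> minkowski C z < t -> scale_set t C z.
Proof.
move=> t0; rewrite /minkowski => /inf_lt[].
  by have [s s0 hs] := sc_exists z; exists s.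
by move=> s [s0 hs] st; apply: (@sc_mono s t z s0 (ltW st)).
Qed.

End OneC.

Section SigmaHelp.
Variables (T : Type) (G : set (set T)).
Let S := <<s G >>.

Lemma sI A B : S A -> S B -> S (A `&` B).
Proof.
have hsub : forall X, S X -> X `<=` setT by [].
have [_ _ _ hI] := (@sigma_algebraP T setT S hsub).1
   (smallest_sigma_algebra setT G).
exact: hI.
Qed.

Lemma sCunion (I : countType) (F : I -> set T) :
  (forall i, S (F i)) -> S (\bigcup_(i in [set: I]) F i).
Proof.
move=> hF.
have -> : \bigcup_(i in [set: I]) F i =
    \bigcup_(n in [set: nat]) (oapp F set0 (pickle_inv n)).
  apply/seteqP; split=> z.
    by case=> i _ Fz; exists (pickle i) => //; rewrite pickleK_inv.
  case=> n _; case: (pickle_inv n) => [i|] //= Fz; by exists i.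
apply: (@sigma_algebra_bigcup T setT G) => n.
case: (pickle_inv n) => [i|] /=; first exact: hF.
exact: (@sigma_algebra0 T setT G).
Qed.

Lemma sCcap (I : countType) (F : I -> set T) :
  (forall i, S (F i)) -> S (\bigcap_(i in [set: I]) F i).
Proof.
move=> hF.
have -> : \bigcap_(i in [set: I]) F i =
    setT `\` \bigcup_(i in [set: I]) (setT `\` F i).
  rewrite setTD setC_bigcup; apply: eq_bigcapr => i _.
  by rewrite setTD setCK.
apply: (@sigma_algebraCD T setT G); apply: sCunion => i.
apply: (@sigma_algebraCD T setT G); exact: hF.
Qed.

End SigmaHelp.

Section Main.
Variables (R : realType) (X : lmodType R) (CC : set (set X)).
Hypothesis hCC : forall C, CC C ->
     [/\ symmetric_set C, alg_open C, convex_set C, C 0 & tauC_separable C].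

Lemma S_gen x V : Cfam CC x V -> FC CC V.
Proof. by move=> h; apply: sub_sigma_algebra; exists x. Qed.

Lemma surj_countable (D : set X) : countable D ->
  exists g : nat -> X, forall d, D d -> exists n, g n = d.
Proof.
move=> /countable_injP[f finj].
exists (fun n => xget 0 [set d | D d /\ f d = n]) => d Dd.
exists (f d).
have : [set d0 | D d0 /\ f d0 = f d] (xget 0 [set d0 | D d0 /\ f d0 = f d]).
  by apply: xgetPex; exists d.
move=> [D1 e]; apply: finj => //; by rewrite in_setE.
Qed.

Lemma sepG C : CC C -> exists g : nat -> X,
  forall x (e : R), 0 < e -> exists n, scale_set e C (x - g n).
Proof.
move=> /hCC[Cs Cao Ccv C0 [D [cD hD]]].
have [g hg] := @surj_countable D cD.

exists g => x e e0.
have [d Dd hd] := hD x e e0.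
have [n gn] := hg d Dd.
by exists n; rewrite gn; apply: sc_mink => //; rewrite -gn.
Qed.

Definition Ball r (Cs : 'I_r -> set X) (rho : 'I_r -> R) (d : 'I_r -> X) :=
  [set z | forall i, scale_set (rho i) (Cs i) (z - d i)].
Arguments Ball {r}.

Lemma memV x r (Cs : 'I_r -> set X) (l : 'I_r -> R) w :
  [set x + y | y in \bigcap_(i in [set: 'I_r]) scale_set (l i) (Cs i)] w <->
  forall i, scale_set (l i) (Cs i) (w - x).
Proof.
split.
  by case=> y hy <- i; rewrite [x + y]addrC addrK; apply: hy.
move=> h; exists (w - x); last by rewrite addrC subrK.
by move=> i _; apply: h.
Qed.

Lemma S_ball r (Cs : 'I_r -> set X) (rho : 'I_r -> R) (d : 'I_r -> X) : (forall i, CC (Cs i)) ->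
  (forall i, 0 < rho i) -> FC CC (Ball Cs rho d).
Proof.
move=> hCs hr.
have -> : Ball Cs rho d = \bigcap_(i in [set: 'I_r])
   [set z | scale_set (rho i) (Cs i) (z - d i)].
  by apply/seteqP; split=> z hz i; [move=> _; exact: hz | exact: hz].
apply: sCcap => i; apply: (@S_gen (d i)).
exists 1%N, (fun _ => Cs i), (fun _ => rho i); split => //; split => //.
apply/seteqP; split=> z.
  by move=> hz; apply/memV.
by move/memV; apply; exact: ord0.
Qed.

Lemma Gfam r (Cs : 'I_r -> set X) : (forall i, CC (Cs i)) ->
  exists G : 'I_r -> nat -> X, forall i x (e : R), 0 < e ->
     exists n, scale_set e (Cs i) (x - G i n).
Proof.
move=> hCs.
have [G hG] := choice (fun i => @sepG (Cs i) (hCs i)).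
by exists G.
Qed.

Lemma cover r (Cs : 'I_r -> set X) (G : 'I_r -> nat -> X) (rho : 'I_r -> R) y (a : R) :
  (forall i x (e : R), 0 < e -> exists n, scale_set e (Cs i) (x - G i n)) ->
  0 < a -> (forall i, 0 < rho i) ->
  exists k : {ffun 'I_r -> nat},
    Ball Cs (fun i => a * rho i) (fun i => G i (k i)) y.
Proof.
move=> hG a0 hr.
have [f hf] := choice (fun i => hG i y (a * rho i) (mulr_gt0 a0 (hr i))).
by exists [ffun i => f i] => i; rewrite ffunE; apply: hf.
Qed.

Lemma tri r (Cs : 'I_r -> set X) (rho : 'I_r -> R) (d : 'I_r -> X) z y : (forall i, CC (Cs i)) ->
  (forall i, 0 < rho i) ->
  Ball Cs rho d z -> Ball Cs rho d y ->
  forall i, scale_set (rho i + rho i) (Cs i) (z - y).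
Proof.
move=> hCs hr hz hy i.
have [Cs1 _ Ccv C0 _] := hCC _ (hCs i).
have -> : z - y = (z - d i) + - (y - d i) by rewrite opprB addrA subrK.
apply: sc_add => //; try exact: hr.
by apply: sc_opp => //; apply: hy.
Qed.


Arguments Gfam {r Cs}. Arguments cover {r Cs G rho}. Arguments tri {r Cs rho d z y}.

Lemma LM2 (f : X -> R) :
  (forall (a : R) (x y : X), f (a *: x + y) = a * f x + f y) ->
  (forall (x : X) (e : R), 0 < e -> tau_nbhs CC x [set y | `|f y - f x| < e]) ->
  forall B : set R, borelR B -> FC CC (f @^-1` B).
Proof.
move=> lin cont.
have f0 : f 0 = 0.
  have := lin 1 0 0; rewrite scaler0 addr0 mul1r => H.
  by apply: (@addrI _ (f 0)); rewrite addr0 -H.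
have fZ a v : f (a *: v) = a * f v by rewrite -[a *: v]addr0 lin f0 addr0.
have fB z y : f z - f y = f (z - y).
  have := lin 1 z (- y); rewrite scale1r mul1r => ->.
  by rewrite -scaleN1r fZ mulN1r.
have [V [r [Cs [l [hCs [hl EV]]]]] hV] := cont 0 1 ltr01.
have key v : (forall i, scale_set (l i) (Cs i) v) -> `|f v| < 1.
  move=> hv; have h := hV v; rewrite /= f0 subr0 in h; apply: h.
  by rewrite EV; apply/memV => i; rewrite subr0.
have [G hG] := Gfam hCs.
have openS U : open U -> FC CC (f @^-1` U).
  move=> oU.
  pose W (t : {ffun 'I_r -> nat} * nat) :=
    Ball Cs (fun i => (t.2.+1%:R)^-1 * l i) (fun i => G i (t.1 i)).
  pose F t := if `[< W t `<=` f @^-1` U >] then W t else set0.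
  have -> : f @^-1` U = \bigcup_(t in [set: {ffun 'I_r -> nat} * nat]) F t.
    apply/seteqP; split => y; last first.
      by case=> t _; rewrite /F; case: ifP => // /asboolP h /h.
    move=> Uy; have [e e0 he] := open_ballR oU Uy.
    pose n := Num.Def.archi_bound (2 / e).
    have hn : 2 / e < n.+1%:R.
      apply: (lt_le_trans (archi_boundP _)); first by rewrite divr_ge0 // ltW.
      by rewrite ler_nat.
    have n0 : 0 < (n.+1%:R : R) by rewrite ltr0n.
    have a0 : 0 < (n.+1%:R : R)^-1 by rewrite invr_gt0.
    have [k hk] := cover y _ hG a0 hl.
    exists (k, n) => //; rewrite /F ifT; last first.
      apply/asboolP => z hz /=.
      pose a2 : R := 2 * (n.+1%:R)^-1.
      have a20 : 0 < a2 by rewrite mulr_gt0.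
      have hzy := tri hCs (fun i => mulr_gt0 a0 (hl i)) hz hk.
      have hv : forall i, scale_set (l i) (Cs i) (a2^-1 *: (z - y)).
        move=> i; have := @sc_mul _ _ _ _ (a2^-1) _ (hzy i).
        have -> : a2^-1 * ((n.+1%:R)^-1 * l i + (n.+1%:R)^-1 * l i) = l i.
          rewrite /a2; field; rewrite gt_eqF //.
        by [].
      have := key _ hv; rewrite fZ normrM gtr0_norm ?invr_gt0 //.
      rewrite ltr_pdivrMl // mulr1 -fB => h.
      apply: he; rewrite distrC; apply: (lt_trans h).
      by rewrite /a2 ltr_pdivrMr // mulrC -ltr_pdivrMr.
    by [].
  apply: sCunion => t; rewrite /F; case: ifP => _.
    by apply: S_ball => // i; rewrite mulr_gt0 // invr_gt0 ltr0n.
  exact: (@sigma_algebra0 X setT _).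
move=> B hB.
have : image_set_system setT f (FC CC) B.
  apply: (smallest_sub (sigma_algebra_image _ (smallest_sigma_algebra _ _))) hB.
  by move=> U oU; rewrite /image_set_system /= setTI; apply: openS.
by rewrite /image_set_system /= setTI.
Qed.


Lemma sc_marginCC C t z : CC C -> 0 < t -> scale_set t C z ->
  exists s, [/\ 0 < s, s < t & scale_set s C z].
Proof. by move=> /hCC[? ? ? ? _]; apply: sc_margin. Qed.

Lemma LM3 (A : set X) : FC CC A ->
  prod_sigma (FC CC) (FC CC) [set p : X * X | A (p.1 + p.2)].
Proof.
move=> hA.
pose add := fun p : X * X => p.1 + p.2.
have : image_set_system setT add (prod_sigma (FC CC) (FC CC)) A.
  apply: (smallest_sub (sigma_algebra_image _ (smallest_sigma_algebra _ _))) hA.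
  move=> V [x _ [r [Cs [l [hCs [hl EV]]]]]].
  rewrite /image_set_system /= setTI.
  have [G hG] := Gfam hCs.
  pose T := ({ffun 'I_r -> nat} * {ffun 'I_r -> nat} * nat)%type.
  pose W1 (t : T) :=
    Ball Cs (fun i => (t.2.+1%:R)^-1 * l i) (fun i => G i (t.1.1 i)).
  pose W2 (t : T) :=
    Ball Cs (fun i => (t.2.+1%:R)^-1 * l i) (fun i => G i (t.1.2 i)).
  pose F t := if `[< W1 t `*` W2 t `<=` add @^-1` V >] then W1 t `*` W2 t
              else set0.
  have -> : add @^-1` V = \bigcup_(t in [set: T]) F t.
    apply/seteqP; split => p; last first.
      by case=> t _; rewrite /F; case: ifP => // /asboolP h /h.
    case: p => u v; rewrite /add /= EV => /memV hw.
    have [s hs] := choice (fun i => @sc_marginCC _ _ _ (hCs i) (hl i) (hw i)).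
    have hm i : exists m : nat, 4 * (m.+1%:R)^-1 * l i <= l i - s i.
      have [s0 sl _] := hs i.
      have d0 : 0 < l i - s i by rewrite subr_gt0.
      exists (Num.Def.archi_bound (4 * l i / (l i - s i))).
      set N := Num.Def.archi_bound _.
      have hN : 4 * l i / (l i - s i) < N.+1%:R.
        apply: (lt_le_trans (archi_boundP _)).
          by rewrite divr_ge0 // ?mulr_ge0 // ltW.
        by rewrite ler_nat.
      have N0 : 0 < (N.+1%:R : R) by rewrite ltr0n.
      rewrite ltr_pdivrMr // in hN.
      rewrite mulrAC ler_pdivrMr // [X in _ <= X]mulrC; exact: ltW.
    have [m hm'] := choice hm.
    pose n := (\max_i m i)%N.
    have n0 : 0 < (n.+1%:R : R) by rewrite ltr0n.
    have a0 : 0 < (n.+1%:R : R)^-1 by rewrite invr_gt0.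
    have [k1 hk1] := cover u _ hG a0 hl.
    have [k2 hk2] := cover v _ hG a0 hl.
    exists (k1, k2, n) => //; rewrite /F ifT; last first.
      apply/asboolP => -[z z'] /= [hz hz']; rewrite /add /= EV.
      apply/memV => i.
      have [Csy Cao Ccv C0 _] := hCC _ (hCs i).
      have r0 : 0 < (n.+1%:R)^-1 * l i by rewrite mulr_gt0.
      have h1 := tri hCs (fun i => mulr_gt0 a0 (hl i)) hz hk1 i.
      have h2 := tri hCs (fun i => mulr_gt0 a0 (hl i)) hz' hk2 i.
      have [s0 sl hsi] := hs i.
      have -> : z + z' - x = (z - u) + ((z' - v) + (u + v - x)).
        rewrite addrA [_ + (z' - v)]addrC !addrA subrK.
        by rewrite [z' - v + z]addrC [z + (z' - v)]addrA subrK.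
      have h3 := @sc_add _ _ _ Ccv _ _ _ _ (addr_gt0 r0 r0) s0 h2 hsi.
      have h4 := @sc_add _ _ _ Ccv _ _ _ _ (addr_gt0 r0 r0) (addr_gt0 (addr_gt0 r0 r0) s0) h1 h3.
      apply: (@sc_mono _ _ _ Ccv C0 _ _ _ (addr_gt0 (addr_gt0 r0 r0) (addr_gt0 (addr_gt0 r0 r0) s0)) _ h4).
      have le1 : (n.+1%:R : R)^-1 <= ((m i).+1%:R)^-1.
        rewrite lef_pV2 ?posrE ?ltr0n // ler_nat ltnS.
        exact: leq_bigmax.
      have hmi := hm' i; rewrite -mulrA in hmi.
      have le2 : (n.+1%:R : R)^-1 * l i <= ((m i).+1%:R)^-1 * l i.
        by rewrite ler_pM2r.
      move: le2 hmi r0 s0.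
      set p := (n.+1%:R : R)^-1 * l i.
      set q := ((m i).+1%:R : R)^-1 * l i.
      lra.
    by split.
  apply: sCunion => t; rewrite /F; case: ifP => _; last first.
    exact: (@sigma_algebra0 (X * X)%type setT _).
  apply: sub_sigma_algebra; exists (W1 t).
    by apply: S_ball => // i; rewrite mulr_gt0 // invr_gt0 ltr0n.
  exists (W2 t) => //.
  by apply: S_ball => // i; rewrite mulr_gt0 // invr_gt0 ltr0n.
by rewrite /image_set_system /= setTI.
Qed.


Lemma scaleS (t : R) (A : set X) : t != 0 -> FC CC A ->
  FC CC ((fun x : X => t *: x) @` A).
Proof.
move=> t0 hA.
have -> : (fun x : X => t *: x) @` A = (fun z => t^-1 *: z) @^-1` A.
  apply/seteqP; split => z.
    by case=> a Aa <-; rewrite /= scalerA mulVf // scale1r.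
  by move=> h; exists (t^-1 *: z) => //; rewrite scalerA mulfV // scale1r.
have : image_set_system setT (fun z => t^-1 *: z) (FC CC) A.
  apply: (smallest_sub (sigma_algebra_image _ (smallest_sigma_algebra _ _))) hA.
  move=> V [x _ [r [Cs [l [hCs [hl EV]]]]]].
  rewrite /image_set_system /= setTI.
  apply: (@S_gen (t *: x)).
  exists r, Cs, (fun i => `|t| * l i); split => //; split.
    by move=> i; rewrite mulr_gt0 // normr_gt0.
  apply/seteqP; split => w.
    rewrite /= EV => /memV h; apply/memV => i.
    have [Csy _ _ _ _] := hCC _ (hCs i).
    have := @sc_abs _ _ _ Csy t _ _ (h i).
    by rewrite scalerBr scalerA mulfV // scale1r.
  move=> /memV h; rewrite /= EV; apply/memV => i.
  have [Csy _ _ _ _] := hCC _ (hCs i).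
  have := @sc_abs _ _ _ Csy t^-1 _ _ (h i).
  rewrite scalerBr scalerA mulVf // scale1r mulrA normfV mulVf ?mul1r //.
  by rewrite normr_eq0.
by rewrite /image_set_system /= setTI.
Qed.

End Main.

Theorem proposition4p4 (R : realType) (X : lmodType R) (CC : set (set X))
  (hCC : forall C, CC C ->
     [/\ symmetric_set C, alg_open C, convex_set C, C 0 & tauC_separable C]) :
  (* (LM1) *)
  (forall x : X, exists B : set (set X),
     (forall V, B V -> FC CC V /\ tau_nbhs CC x V) /\
     (forall W, tau_nbhs CC x W -> exists2 V, B V & V `<=` W)) /\
  (* (LM2) *)
  (forall f : X -> R,
     (forall (a : R) (x y : X), f (a *: x + y) = a * f x + f y) ->
     (forall (x : X) (e : R), 0 < e -> tau_nbhs CC x [set y | `|f y - f x| < e]) ->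
     forall B : set R, borelR B -> FC CC (f @^-1` B)) /\
  (* (LM3) *)
  (forall A : set X, FC CC A ->
     prod_sigma (FC CC) (FC CC) [set p : X * X | A (p.1 + p.2)]) /\
  (* (LM4) *)
  (forall t : R, t != 0 ->
     [set (fun x : X => t *: x) @` A | A in FC CC] = FC CC).
Proof.
split.
  move=> x; exists (Cfam CC x); split.
    by move=> V hV; split; [exact: (@S_gen _ _ _ x V hV) | exists V].
  by move=> W [V hV VW]; exists V.
split; first exact: (@LM2 R X CC hCC).
split; first exact: (@LM3 R X CC hCC).
move=> t t0; apply/seteqP; split => B.
  by case=> A hA <-; apply: (@scaleS R X CC hCC).
move=> hB; exists ((fun x : X => t^-1 *: x) @` B).
  by apply: (@scaleS R X CC hCC) => //; rewrite invr_eq0.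
apply/seteqP; split => z.
  by case=> w [b Bb <-] <-; rewrite scalerA mulfV // scale1r.
by move=> Bz; exists (t^-1 *: z); [exists z | rewrite scalerA mulfV // scale1r].
Qed.
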